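(* Let $n\ge1$, let $d\ge1$ be a square-free integer and let $L(\mathbf{X})=\sum_{i,j=1}^n a_{ij}x_{ij}\in\mathbb{Z}[\mathbf{X}]$ be a linear form in the $n^2$ variables $\mathbf{X}=(x_{ij})_{i,j=1}^n$. Let $D=\gcd(L,d)$ be the greatest common divisor of $d$ and all coefficients $a_{ij}$. Define \[ S_d(L)=\sum_{\substack{\mathbf{X}\in\mathbb{Z}_{d}^{n\times n}\\ \det\mathbf{X}\equiv0 \bmod d}}\exp\left(2\pi i\,L(\mathbf{X})/d\right). \] Then \[ |S_d(L)|\le d^{n^2+o(1)}\begin{cases}(D/d)^n & \text{if $L$ is a monomial},\\ (D/d)^{(n+1)/2} & \text{otherwise},\end{cases} \] where $o(1)$ denotes a quantity tending to $0$ as $d\to\infty$, uniformly in $L$ (depending only on $n$).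
   Context: $\mathbb{Z}_{d}$ denotes the residue ring modulo $d$, represented by $\{0,\dots,d-1\}$. ''$L$ is a monomial'' means exactly one coefficient $a_{ij}$ is nonzero. *)

(* Defs.v *)
From HB Require Import structures.
From mathcomp Require Import all_boot all_order all_algebra.
From mathcomp Require Import all_classical all_reals all_analysis.
Set Implicit Arguments. Unset Strict Implicit. Unset Printing Implicit Defensive.
Import Order.TTheory GRing.Theory Num.Theory.
Local Open Scope ring_scope.

Definition squarefree (d : nat) : Prop :=
  forall p : nat, prime p -> ~~ (p ^ 2 %| d)%N.

Definition lift_mx (d n : nat) (X : 'M['I_d]_n) : 'M[int]_n :=
  map_mx (fun x : 'I_d => (nat_of_ord x)%:Z) X.

Definition linform (n : nat) (a : 'M[int]_n) (Y : 'M[int]_n) : int :=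
  \sum_(i < n) \sum_(j < n) a i j * Y i j.

Definition detzero (d n : nat) (X : 'M['I_d]_n) : bool :=
  (d%:Z %| \det (lift_mx X))%Z.

Definition Sd_re (R : realType) (d n : nat) (a : 'M[int]_n) : R :=
  \sum_(X : 'M['I_d]_n | detzero X)
     cos (2 * pi * (linform a (lift_mx X))%:~R / d%:R).
Definition Sd_im (R : realType) (d n : nat) (a : 'M[int]_n) : R :=
  \sum_(X : 'M['I_d]_n | detzero X)
     sin (2 * pi * (linform a (lift_mx X))%:~R / d%:R).

Definition Sd_abs (R : realType) (d n : nat) (a : 'M[int]_n) : R :=
  Num.sqrt (Sd_re R d a ^+ 2 + Sd_im R d a ^+ 2).

Definition gcdLd (d n : nat) (a : 'M[int]_n) : nat :=
  \big[gcdn/d]_(i < n) \big[gcdn/d]_(j < n) `|a i j|%N.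

Definition is_monomial (n : nat) (a : 'M[int]_n) : bool :=
  #|[set ij : 'I_n * 'I_n | a ij.1 ij.2 != 0]| == 1%N.

(* Main.v *)
Require Import Defs.
From HB Require Import structures.
From mathcomp Require Import all_boot all_order all_algebra.
From mathcomp Require Import all_classical all_reals all_analysis.
Import Order.TTheory GRing.Theory Num.Theory.
Import numFieldNormedType.Exports.
Local Open Scope classical_set_scope.
Local Open Scope ring_scope.

From mathcomp Require Import complex ring lra zify.
Set Implicit Arguments. Unset Strict Implicit. Unset Printing Implicit Defensive.
Local Close Scope classical_set_scope.

Section Char.
Variable C : numFieldType.
Variable m : nat.
Local Notation d := m.+2.
Local Notation Z := 'Z_d.
Variable e : Z -> C.
Hypothesis eD : forall x y, e (x + y) = e x * e y.
Hypothesis e_norm : forall x, `|e x| = 1.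
Hypothesis e1 : forall x, e x = 1 -> x = 0.

Lemma e0 : e 0 = 1.
Proof.
have h := eD 0 0; rewrite addr0 in h.
have nz : e 0 != 0 by rewrite -normr_eq0 e_norm oner_eq0.
by apply: (mulfI nz); rewrite mulr1 -h.
Qed.

Lemma sum_char (V : finType) (phi : V -> Z) (sh : V -> V) (c : Z) :
  injective sh -> (forall v, phi (sh v) = phi v + c) -> c != 0 ->
  \sum_(v : V) e (phi v) = 0.
Proof.
move=> ish hphi cnz.
have h : \sum_(v : V) e (phi v) = e c * \sum_(v : V) e (phi v).
  rewrite {1}(reindex_inj ish) /= mulr_sumr; apply: eq_bigr => v _.
  by rewrite hphi eD mulrC.
have : (1 - e c) * \sum_(v : V) e (phi v) = 0 by rewrite mulrBl mul1r -h subrr.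
move/eqP; rewrite mulf_eq0 => /orP [|/eqP //].
by rewrite subr_eq0 => /eqP /esym /e1 /eqP; rewrite (negbTE cnz).
Qed.

Lemma dnz : (d%:R : C) != 0.
Proof. by rewrite pnatr_eq0. Qed.

Lemma sum_scal (z : Z) : \sum_(t : Z) e (t * z) = (z == 0)%:R * d%:R.
Proof.
have [->|nz] := eqVneq z 0.
  under eq_bigr do rewrite mulr0 e0.
  by rewrite sumr_const card_ord mul1r.
rewrite mul0r; apply: (sum_char (sh := fun t => t + 1) (c := z)) => //.
  exact: addIr.
by move=> v; rewrite mulrDl mul1r.
Qed.

Lemma ind_char (z : Z) : (z == 0)%:R = d%:R^-1 * \sum_(t : Z) e (t * z).
Proof. by rewrite sum_scal mulrCA mulVf ?dnz // mulr1. Qed.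

Definition dotv n (a v : 'cV[Z]_n) : Z := \sum_i a i 0 * v i 0.

Lemma sum_vec n (b : 'cV[Z]_n) :
  \sum_(v : 'cV[Z]_n) e (dotv b v) = (b == 0)%:R * (d ^ n)%:R.
Proof.
have [->|nz] := eqVneq b 0.
  rewrite mul1r; under eq_bigr => v _.
    rewrite /dotv (eq_bigr (fun _ => 0)); last by move=> i _; rewrite mxE mul0r.
    rewrite big1 // e0; over.
  by rewrite sumr_const card_mx card_ord muln1.
have [i bi] : exists i, b i 0 != 0.
  apply/existsP; move: nz; apply: contraR; rewrite negb_exists => /forallP h.
  apply/eqP/matrixP => k l; rewrite (ord1 l) mxE; exact/eqP/negbNE/h.
rewrite mul0r; apply: (sum_char (sh := fun v => v + delta_mx i 0) (c := b i 0)) => //.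
  exact: addIr.
move=> v; rewrite /dotv; under eq_bigr do rewrite !mxE mulrDr.
rewrite big_split /=; congr (_ + _).
rewrite (bigD1 i) //= eqxx mulr1 big1 ?addr0 // => k /negbTE ki.
by rewrite ki mulr0.
Qed.


Definition dotm n (A X : 'M[Z]_n) : Z := \sum_i \sum_j A i j * X i j.
Definition Ssum n (A : 'M[Z]_n) : C :=
  \sum_(X : 'M[Z]_n) (\det X == 0)%:R * e (dotm A X).
Definition ann n (a : 'cV[Z]_n) := [set t : Z | t *: a == 0].
Definition shiftm n (j0 : 'I_n) (v : 'cV[Z]_n) : 'M[Z]_n :=
  \matrix_(i, j) ((j == j0)%:R * v i 0).
Definition cofv n (j0 : 'I_n) (X : 'M[Z]_n) : 'cV[Z]_n :=
  \col_i cofactor X i j0.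

Lemma det_shift n (j0 : 'I_n) X v :
  \det (X + shiftm j0 v) = \det X + dotv v (cofv j0 X).
Proof.
rewrite (expand_det_col _ j0) (expand_det_col X j0) /dotv -big_split.
apply: eq_bigr => i _.
have -> : cofactor (X + shiftm j0 v) i j0 = cofactor X i j0.
  rewrite /cofactor; congr (_ * \det _); apply/matrixP => k l.
  by rewrite !mxE eq_sym (negbTE (neq_lift j0 l)) mul0r addr0.
by rewrite !mxE eqxx mul1r mulrDl.
Qed.

Lemma dot_shift n (j0 : 'I_n) A X v :
  dotm A (X + shiftm j0 v) = dotm A X + dotv (col j0 A) v.
Proof.
rewrite /dotm /dotv -big_split; apply: eq_bigr => i _ /=.
under eq_bigr do rewrite !mxE mulrDr.
rewrite big_split /=; congr (_ + _).
rewrite (bigD1 j0) //= eqxx mul1r big1 ?addr0 ?mxE // => k /negbTE ->.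
by rewrite mul0r mulr0.
Qed.

Lemma dotv_lin n (a c v : 'cV[Z]_n) (t : Z) :
  t * dotv v c + dotv a v = dotv (a + t *: c) v.
Proof.
rewrite /dotv mulr_sumr -big_split; apply: eq_bigr => i _ /=.
by rewrite !mxE mulrDl addrC; congr (_ + _); rewrite mulrCA mulrC.
Qed.

Lemma Ssum_eq n (A : 'M[Z]_n) (j0 : 'I_n) :
  Ssum A = d%:R^-1 * \sum_(X : 'M[Z]_n) \sum_(t : Z)
     ((col j0 A + t *: cofv j0 X) == 0)%:R * (e (dotm A X) * e (t * \det X)).
Proof.
set a := col j0 A.
have step1 : forall v, Ssum A = \sum_(X : 'M[Z]_n)
    (\det X + dotv v (cofv j0 X) == 0)%:R * (e (dotm A X) * e (dotv a v)).
  move=> v; rewrite /Ssum (reindex_inj (addIr (shiftm j0 v))) /=.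
  by apply: eq_bigr => X _; rewrite det_shift dot_shift eD.
have step3 : forall X, \sum_(v : 'cV[Z]_n)
    (\det X + dotv v (cofv j0 X) == 0)%:R * e (dotv a v) =
    d%:R^-1 * (d ^ n)%:R * \sum_(t : Z) ((a + t *: cofv j0 X) == 0)%:R * e (t * \det X).
  move=> X.
  under eq_bigr => v _ do rewrite ind_char -mulrA.
  under eq_bigr => v _ do rewrite mulr_suml.
  rewrite -mulr_sumr exchange_big -mulrA; congr (_ * _).
  rewrite mulr_sumr; apply: eq_bigr => t _.
  under eq_bigr => v _ do rewrite mulrDr eD -mulrA -eD (dotv_lin a (cofv j0 X) v t).
  rewrite -mulr_sumr (sum_vec (a + t *: cofv j0 X)); ring.
have step2 : (d ^ n)%:R * Ssum A = \sum_(X : 'M[Z]_n) e (dotm A X) *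
    \sum_(v : 'cV[Z]_n) (\det X + dotv v (cofv j0 X) == 0)%:R * e (dotv a v).
  have <- : \sum_(v : 'cV[Z]_n) Ssum A = (d ^ n)%:R * Ssum A.
    by rewrite sumr_const card_mx card_ord muln1 mulr_natl.
  under eq_bigr => v _ do rewrite (step1 v).
  rewrite exchange_big; apply: eq_bigr => X _; rewrite mulr_sumr.
  by apply: eq_bigr => v _; rewrite mulrCA.
have dnnz : ((d ^ n)%:R : C) != 0 by rewrite pnatr_eq0 expn_eq0.
apply: (mulfI dnnz); rewrite step2.
under eq_bigr => X _ do rewrite step3.
rewrite [RHS]mulrA [RHS]mulr_sumr; apply: eq_bigr => X _.
rewrite !mulr_sumr; apply: eq_bigr => t _; ring.
Qed.

Lemma Ssum_le n (A : 'M[Z]_n) (j0 : 'I_n) :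
  `|Ssum A| <= d%:R^-1 *
     \sum_(X : 'M[Z]_n) (#|[set t : Z | col j0 A + t *: cofv j0 X == 0]|%:R : C).
Proof.
rewrite (Ssum_eq A j0) normrM ger0_norm ?invr_ge0 ?ler0n //.
apply: ler_wpM2l; first by rewrite invr_ge0 ler0n.
apply: le_trans (ler_norm_sum _ _ _) _; apply: ler_sum => X _.
apply: le_trans (ler_norm_sum _ _ _) _.
rewrite -sumr_const [X in _ <= X]big_mkcond /=; apply: ler_sum => t _.
rewrite inE normrM !normrM !e_norm !mulr1.
by case: (_ == 0); rewrite ?normr1 ?normr0.
Qed.

Definition perp n (j0 : 'I_n) (a : 'cV[Z]_n) (X : 'M[Z]_n) : bool :=
  [forall k, (k != j0) ==> (dotv a (col k X) == 0)].

Lemma card_t_le n (j0 : 'I_n) (A : 'M[Z]_n) X :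
  (#|[set t : Z | (col j0 A + t *: cofv j0 X == 0)%R]| <=
    perp j0 (col j0 A) X * #|ann (col j0 A)|)%N.
Proof.
set a := col j0 A; set c := cofv j0 X.
case: (set_0Vmem [set t : Z | a + t *: c == 0]) => [-> | [t0]].
  by rewrite cards0.
rewrite inE => h0.
have ha : a = - (t0 *: c) by apply/eqP; rewrite -addr_eq0.
have hp : perp j0 a X.
  apply/forallP => k; apply/implyP => kj0.
  have h1 : dotv c (col k X) = (\adj X *m X) j0 k.
    rewrite /dotv !mxE; apply: eq_bigr => i _; by rewrite !mxE.
  rewrite ha /dotv.
  have -> : \sum_i (- (t0 *: c)) i 0 * col k X i 0 = - t0 * dotv c (col k X).
    rewrite /dotv mulr_sumr; apply: eq_bigr => i _; rewrite !mxE; ring.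
  by rewrite h1 mul_adj_mx mxE (eq_sym j0 k) (negbTE kj0) mulr0n mulr0.
rewrite hp mul1n.
rewrite -(card_imset _ (addIr (- t0))).
apply: subset_leq_card; apply/fintype.subsetP => u /imsetP [t]; rewrite inE => ht ->.
rewrite inE.
have hc : (t - t0) *: c = 0.
  apply/eqP; rewrite scalerBl subr_eq0.
  move: ht h0; rewrite !addr_eq0 => /eqP ht /eqP h0'.
  by apply/eqP; rewrite -[t *: c]opprK -ht h0' opprK.
by rewrite ha scalerN scalerA mulrC -scalerA hc scaler0 oppr0.
Qed.

Lemma dotvZ n (a y : 'cV[Z]_n) t : t * dotv a y = dotv (t *: a) y.
Proof. by rewrite /dotv mulr_sumr; apply: eq_bigr => i _; rewrite !mxE mulrA. Qed.

Lemma cardK n (a : 'cV[Z]_n) :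
  (#|[set y : 'cV[Z]_n | (dotv a y == 0)%R]| * d = d ^ n * #|ann a|)%N.
Proof.
apply/eqP; rewrite -(eqr_nat C) !natrM; apply/eqP.
have -> : (#|[set y : 'cV[Z]_n | dotv a y == 0]|%:R : C) =
    \sum_(y : 'cV[Z]_n) ((dotv a y == 0)%:R).
  rewrite -sumr_const big_mkcond /=; apply: eq_bigr => y _.
  by rewrite inE; case: (_ == _).
under eq_bigr => y _ do rewrite ind_char.
rewrite -mulr_sumr exchange_big /=.
rewrite (eq_bigr (fun t => ((t *: a == 0)%:R * (d ^ n)%:R))); last first.
  move=> t _; rewrite -(sum_vec (t *: a)); apply: eq_bigr => y _.
  by rewrite dotvZ.
rewrite -mulr_suml.
have -> : \sum_(t : Z) ((t *: a == 0)%:R : C) = #|ann a|%:R.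
  rewrite -sumr_const [in RHS]big_mkcond /=; apply: eq_bigr => t _.
  by rewrite inE; case: (_ == _).
have := dnz; move=> hd.
move: hd; set D := (d%:R : C); set N := (d ^ n)%:R; clearbody D N => hd; by field.
Qed.

Lemma card_perp n (j0 : 'I_n) (a : 'cV[Z]_n) :
  (#|[set X : 'M[Z]_n | perp j0 a X]| <=
     d ^ n * #|[set y : 'cV[Z]_n | (dotv a y == 0)%R]| ^ n.-1)%N.
Proof.
set K := [set y : 'cV[Z]_n | dotv a y == 0].
pose F := fun k : 'I_n => [pred y : 'cV[Z]_n | (k == j0) || (y \in K)].
pose phi := fun X : 'M[Z]_n => [ffun k => col k X].
have phi_inj : injective phi.
  move=> X Y /ffunP h; apply/matrixP => i j; have := h j.
  by rewrite !ffunE => /matrixP /(_ i 0); rewrite !mxE.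
rewrite -(card_imset _ phi_inj).
apply: (leq_trans (subset_leq_card (_ : _ \subset family F))).
  apply/fintype.subsetP => f /imsetP [X]; rewrite inE => hX ->.
  apply/familyP => k; rewrite inE /= ffunE.
  case: eqP => //= /eqP kj; rewrite inE; exact: (implyP (forallP hX k) kj).
rewrite card_family.
have -> : foldr muln 1 [seq #|F x| | x : 'I_n] = (\prod_(k < n) #|F k|)%N.
  by rewrite foldrE big_image.
rewrite (bigD1 j0) //=.
have -> : #|F j0| = #|{: 'cV[Z]_n}| by apply: eq_card => y; rewrite !inE eqxx.
rewrite card_mx card_ord muln1 leq_mul2l; apply/orP; right.
rewrite (eq_bigr (fun _ => #|K|)); last first.
  by move=> k kj; apply: eq_card => y; rewrite !inE (negbTE kj).
rewrite prod_nat_const.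
by rewrite cardC1 card_ord.
Qed.

Lemma nat_ident (D k n' : nat) :
  (D ^ n'.+1 * (D ^ n' * k) ^ n' * k = D * (D ^ (n'.+1 * n'.+1 - n'.+1) * k ^ n'.+1))%N.
Proof.
have -> : (n'.+1 * n'.+1 - n'.+1 = n' * n' + n')%N.
  by rewrite mulSn addKn mulnS addnC.
rewrite expnMn -expnM !expnD !expnS; ring.
Qed.

Lemma Ssum_bound n (A : 'M[Z]_n) (j0 : 'I_n) :
  `|Ssum A| <= (d ^ (n * n - n) * #|ann (col j0 A)| ^ n)%:R.
Proof.
apply: le_trans (Ssum_le A j0) _.
set a := col j0 A.
set K := [set y : 'cV[Z]_n | (dotv a y == 0)%R].
have h1 : (\sum_(X : 'M[Z]_n)
      #|[set t : Z | (col j0 A + t *: cofv j0 X == 0)%R]|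
    <= #|[set X : 'M[Z]_n | perp j0 a X]| * #|ann a|)%N.
  apply: leq_trans (@leq_sum _ (index_enum _) predT _ _ (fun X _ => card_t_le j0 A X)) _.
  rewrite -big_distrl /= leq_mul2r; apply/orP; right.
  rewrite -sum1_card [X in (_ <= X)%N]big_mkcond /=.
  by rewrite leq_eqVlt; apply/orP; left; apply/eqP; apply: eq_bigr => X _; rewrite inE; case: (perp _ _ _).
have h2 := card_perp j0 a.
have h3 := cardK a.
have hn : (0 < n)%N := leq_ltn_trans (leq0n _) (ltn_ord j0).
have hK : #|K| = (d ^ n.-1 * #|ann a|)%N.
  apply/eqP; rewrite -(eqn_pmul2r (isT : (0 < d)%N)) -/K h3.
  have ex : (d ^ n = d ^ n.-1 * d)%N by case: (n) hn => // n' _; rewrite expnS mulnC.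
  by rewrite ex mulnAC.
rewrite -natr_sum.
apply: (@le_trans _ _ (d%:R^-1 * ((d ^ n * #|K| ^ n.-1 * #|ann a|)%N)%:R)).
  apply: ler_wpM2l; first by rewrite invr_ge0 ler0n.
  rewrite ler_nat; apply: leq_trans h1 _; by rewrite leq_mul2r h2 orbT.
rewrite hK; move: (#|ann a|) => k; clear -hn.
case: n hn => // n' _ /=.
by rewrite nat_ident natrM mulKf ?dnz.
Qed.

Lemma dotm_tr n (A X : 'M[Z]_n) : dotm A X = \tr (A^T *m X).
Proof.
rewrite /dotm /mxtrace exchange_big; apply: eq_bigr => i _.
by rewrite mxE; apply: eq_bigr => k _; rewrite mxE.
Qed.

Lemma Ssum_mulmx n (A F : 'M[Z]_n) : \det F = 1 -> Ssum A = Ssum (A *m F^T).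
Proof.
move=> hF; have Fu : F \in unitmx by rewrite unitmxE hF unitr1.
rewrite /Ssum (reindex_inj (can_inj (mulmxK Fu))) /=.
apply: eq_bigr => X _; rewrite det_mulmx hF mulr1; congr (_ * e _).
rewrite !dotm_tr trmx_mul trmxK mulmxA mxtrace_mulC mulmxA; by [].
Qed.

Section Reg.
Hypothesis reg : forall x : Z, exists y, x * x * y == x.

Lemma vec_idem n (b : 'cV[Z]_n) :
  exists f : Z, f *: b = b /\ forall u, u *: b = 0 -> u * f = 0.
Proof.
pose y i := xchoose (reg (b i 0)).
have hy : forall i, b i 0 * b i 0 * y i = b i 0 := fun i => eqP (xchooseP (reg (b i 0))).
exists (1 - \prod_i (1 - b i 0 * y i)); split.
  apply/matrixP => i j; rewrite (ord1 j) !mxE mulrBl mul1r (bigD1 i) //=.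
  rewrite mulrAC mulrBl mul1r -mulrA [y i * _]mulrC mulrA hy subrr mul0r subr0.
  by [].
move=> u hu.
have hui : forall i, u * b i 0 = 0.
  by move=> i; move/matrixP: hu => /(_ i 0); rewrite !mxE.
rewrite mulrBr mulr1.
have -> : u * \prod_i (1 - b i 0 * y i) = u.
  elim/big_rec: _ => [|i x _ IH]; first by rewrite mulr1.
  by rewrite mulrA mulrBr mulr1 mulrA hui mul0r subr0 IH.
by rewrite subrr.
Qed.

Lemma merge n (b1 b2 : 'cV[Z]_n) :
  exists s, forall t, t *: (b1 + s *: b2) = 0 -> t *: b1 = 0 /\ t *: b2 = 0.
Proof.
have [f [hf1 hf2]] := vec_idem b1.
have ff : (1 - f) * f = 0 by apply: hf2; rewrite scalerBl scale1r hf1 subrr.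
exists (1 - f) => t ht.
have h1 : t *: b1 = 0.
  have := congr1 (fun v => f *: v) ht.
  rewrite /= scaler0 !scalerDr !scalerA [f * t]mulrC -mulrA.
  by rewrite [f * (1 - f)]mulrC ff mulr0 scale0r addr0 -scalerA hf1.
split=> //.
have tf : t * f = 0 by apply: hf2.
move: ht; rewrite scalerDr h1 add0r scalerA mulrBr mulr1 tf subr0.
by [].
Qed.

Lemma exists_w n (A : 'M[Z]_n.+1) :
  exists w : 'cV[Z]_n.+1, w 0 0 = 1 /\ forall t, t *: (A *m w) = 0 -> t *: A = 0.
Proof.
have main : forall k, exists w : 'cV[Z]_n.+1, w 0 0 = 1 /\
    forall t, t *: (A *m w) = 0 -> forall j : 'I_n.+1, (j <= k)%N -> t *: col j A = 0.
  elim=> [|k [w [w0 hw]]].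
    exists (delta_mx 0 0); split; first by rewrite mxE.
    move=> t ht j; rewrite leqn0 => /eqP j0.
    have -> : j = 0 by apply: val_inj.
    by rewrite colE.
  have [kn|kn] := ltnP k.+1 n.+1; last first.
    exists w; split=> // t ht j hj; apply: hw => //.
    by rewrite -ltnS; apply: leq_trans kn; exact: ltn_ord.
  pose j1 : 'I_n.+1 := Ordinal kn.
  have [s hs] := merge (A *m w) (col j1 A).
  exists (w + s *: delta_mx j1 0); split.
    by rewrite !mxE w0 /= mulr0 addr0.
  move=> t ht.
  have [h1 h2] : t *: (A *m w) = 0 /\ t *: col j1 A = 0.
    apply: hs; rewrite -[RHS]ht; congr (_ *: _).
    by rewrite mulmxDr -scalemxAr -colE.
  move=> j; rewrite leq_eqVlt ltnS => /orP [/eqP jk|jk]; last exact: hw.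
  by have -> : j = j1 by apply: val_inj.
have [w [w0 hw]] := main n.
exists w; split=> // t ht; apply/matrixP => i j.
have := hw t ht j (leq_trans (ltn_ord j) (leqnn _)).
by move/matrixP/(_ i 0); rewrite !mxE.
Qed.

Definition annM n (A : 'M[Z]_n) := [set t : Z | t *: A == 0].

Theorem abstract_bound n (A : 'M[Z]_n.+1) :
  `|Ssum A| <= (d ^ (n.+1 * n.+1 - n.+1) * #|annM A| ^ n.+1)%:R.
Proof.
have [w [w0 hw]] := exists_w A.
pose F : 'M[Z]_n.+1 := \matrix_(i, j) (if i == 0 then w j 0 else (i == j)%:R).
have hF : \det F = 1.
  rewrite -det_tr det_trig.
    rewrite (bigD1 0) //= big1 ?mulr1; first by rewrite !mxE eqxx w0.
    by move=> i /negbTE i0; rewrite !mxE i0 eqxx.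
  apply/forallP => i; apply/forallP => j; apply/implyP => ij.
  rewrite !mxE; have -> : (j == 0) = false.
    by apply/negbTE; apply/eqP => j0; move: ij; rewrite j0.
  have -> : (j == i) = false by apply/eqP => ji; move: ij; rewrite ji ltnn.
  by rewrite eqxx.
rewrite (Ssum_mulmx A hF).
apply: le_trans (Ssum_bound _ 0) _.
rewrite ler_nat leq_mul2l; apply/orP; right.
rewrite leq_exp2r //; apply: subset_leq_card; apply/fintype.subsetP => t.
rewrite !inE => /eqP ht; apply/eqP; apply: hw; rewrite -ht; congr (_ *: _).
apply/matrixP => i j; rewrite (ord1 j) !mxE; apply: eq_bigr => k _.
by rewrite !mxE.
Qed.

End Reg.

End Char.

Lemma sqf_dvd (z : nat) : forall d, (0 < d)%N -> squarefree d ->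
  (forall p, prime p -> (p %| d)%N -> (p %| z)%N) -> (d %| z)%N.
Proof.
move=> d; elim: d.+1 {-2}d (ltnSn d) => // N IH d' hd' d0 sq hp.
have [d1|] := ltnP 1 d'; last first.
  by move=> h; have -> : d' = 1%N by apply/anti_leq; rewrite h d0.
set p := pdiv d'.
have pp : prime p := pdiv_prime d1.
have pd : (p %| d')%N := pdiv_dvd d'.
set d'' := (d' %/ p)%N.
have dd : d' = (d'' * p)%N by rewrite divnK.
have pnd : ~~ (p %| d'')%N.
  apply/negP => h; move: (sq p pp); rewrite dd -mulnn.
  by rewrite dvdn_pmul2r ?prime_gt0 // h.
have d''0 : (0 < d'')%N by rewrite divn_gt0 ?prime_gt0 // dvdn_leq.
have d''lt : (d'' < N)%N.
  have := ltn_Pdiv (prime_gt1 pp) d0; rewrite -/d'' => h.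
  by apply: leq_trans h _; rewrite -ltnS.
have sq'' : squarefree d''.
  move=> q qp; apply/negP => h; move: (sq q qp); rewrite dd.
  by rewrite (dvdn_mulr _ h).
have h'' : (d'' %| z)%N.
  apply: IH => // q qp qd; apply: hp => //; rewrite dd; exact: dvdn_mulr.
rewrite dd mulnC Gauss_dvd ?prime_coprime // h'' andbT.
exact: hp.
Qed.

Section Zd.
Variable m : nat.
Local Notation d := m.+2.
Local Notation Z := 'Z_d.

Lemma val_exp (x : Z) k : val (x ^+ k) = ((val x) ^ k %% d)%N.
Proof.
elim: k => [|k IH]; first by rewrite expr0 expn0 modn_small.
by rewrite exprS expnS /= IH modnMmr.
Qed.

Hypothesis sq : squarefree d.

Lemma reduced (z : Z) k : z ^+ k.+1 = 0 -> z = 0.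
Proof.
move=> hz.
have h : (d %| (val z) ^ k.+1)%N by rewrite /dvdn -val_exp hz.
have : (d %| val z)%N.
  apply: sqf_dvd => // p pp pd.
  have := dvdn_trans pd h; rewrite Euclid_dvdX //; by case/andP.
move=> hdz; case: (posnP (val z)) => [z0|zp]; first by apply: val_inj.
by have := dvdn_leq zp hdz; rewrite leqNgt ltn_ord.
Qed.

Lemma idem_exp (f : Z) k : f * f = f -> f ^+ k.+1 = f.
Proof.
move=> ff; elim: k => [|k IH]; first by rewrite expr1.
by rewrite exprS IH ff.
Qed.

Lemma regular (x : Z) : exists y, x * x * y == x.
Proof.
pose f := fun i : 'I_d.+1 => x ^+ i.
have : ~~ injectiveb f.
  apply/negP => /injectiveP /leq_card; by rewrite !card_ord ltnn.
move=> /injectivePn [i [j ij fij]].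
wlog lij : i j ij fij / (i < j)%N.
  move=> H; have [l|] := ltnP i j; first exact: (H i j).
  rewrite leq_eqVlt => /orP [/eqP e|l].
    have iej : i = j by apply: val_inj.
    by move: ij; rewrite iej eqxx.
  by apply: (H j i) => //; rewrite eq_sym.
set M := i.+1; set k := (j - i)%N.
have k0 : (0 < k)%N by rewrite subn_gt0.
have hMk : x ^+ (M + k) = x ^+ M.
  have fij' : x ^+ i = x ^+ j := fij.
  have e1 : (M + k = (j : nat).+1)%N by rewrite /M /k addSn subnKC // ltnW.
  by rewrite e1 !exprS fij'.
have hq : forall q, x ^+ (M + q * k) = x ^+ M.
  elim=> [|q IH]; first by rewrite mul0n addn0.
  by rewrite mulSn addnA exprD hMk -exprD IH.
set e := x ^+ (M * k).
have Mk : (M <= M * k)%N by rewrite leq_pmulr.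
have ee : e * e = e.
  rewrite /e -exprD.
  have -> : (M * k + M * k = (M + M * k) + (M * k - M))%N.
    move: Mk; set P := (M * k)%N; move=> Mk; lia.
  by rewrite exprD hq -exprD subnKC.
have xe : x ^+ M * e = x ^+ M by rewrite /e -exprD hq.
have : (x - x * e) ^+ M = 0.
  rewrite -{1}[x]mulr1 -mulrBr exprMn /M (idem_exp (f := 1 - e)); last first.
    by rewrite mulrBr mulr1 mulrBl mul1r ee subrr subr0.
  by rewrite mulrBr mulr1 -/M xe subrr.
move/reduced/eqP; rewrite subr_eq0 => /eqP hx.
exists (x ^+ (M * k).-1); apply/eqP.
by rewrite -mulrA -exprS prednK ?muln_gt0 // -/e -hx.
Qed.

Lemma natr_Zp_eq0 (n : nat) : ((n%:R : Z) == 0) = (d %| n)%N.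
Proof. by rewrite -val_eqE /= val_Zp_nat. Qed.

Lemma intr_Zp_eq0 (z : int) : ((z%:~R : Z) == 0) = (d %| `|z|%N)%N.
Proof.
case: z => n; first by rewrite -pmulrn natr_Zp_eq0.
by rewrite NegzE mulrNz oppr_eq0 -pmulrn natr_Zp_eq0.
Qed.


Lemma annM_card n (a : 'M[int]_n) :
  (#|annM (map_mx (fun z : int => z%:~R : Z) a)| <= gcdLd d a)%N.
Proof.
set g := gcdLd d a.
have gd : (g %| d)%N.
  rewrite /g /gcdLd; elim/big_rec: _ => // i x _ IH.
  exact: dvdn_trans (dvdn_gcdr _ _) IH.
have g0 : (0 < g)%N.
  by case: (posnP g) gd => // ->; rewrite dvd0n.
have key : forall t : Z, t \in annM (map_mx (fun z : int => z%:~R : Z) a) ->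
    (d %| t * g)%N.
  move=> t; rewrite inE => /eqP /matrixP ht.
  have hij : forall i j, (d %| t * `|a i j|)%N.
    move=> i j; have := ht i j; rewrite !mxE.
    rewrite -[t in t * _]natr_Zp pmulrn -intrM.
    move=> /eqP; rewrite intr_Zp_eq0 abszM /=; by [].
  rewrite /g /gcdLd; apply: (big_ind (fun x => d %| t * x)%N).
  - exact: dvdn_mull.
  - by move=> x y hx hy; rewrite muln_gcdr dvdn_gcd hx hy.
  move=> i _; apply: (big_ind (fun x => d %| t * x)%N).
  - exact: dvdn_mull.
  - by move=> x y hx hy; rewrite muln_gcdr dvdn_gcd hx hy.
  by move=> j _; exact: hij.
set h := (d %/ g)%N.
have dhg : d = (h * g)%N by rewrite divnK.
have h0 : (0 < h)%N by rewrite divn_gt0 // dvdn_leq.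
apply: (@leq_trans #|[set ((k * h)%N%:R : Z) | k : 'I_g]|); last first.
  by apply: leq_trans (leq_imset_card _ _) _; rewrite card_ord.
apply: subset_leq_card; apply/fintype.subsetP => t /key.
rewrite {1}dhg dvdn_pmul2r // => ht.
have kg : (t %/ h < g)%N by rewrite ltn_divLR // mulnC -dhg ltn_ord.
apply/imsetP; exists (Ordinal kg) => //=.
apply: val_inj; rewrite /= val_Zp_nat // divnK // modn_small //.
Qed.

End Zd.

Section Final.
Variable R : realType.
Local Notation C := R[i].

Definition Ec (d : nat) (z : int) : C :=
  Complex (cos (2 * pi * z%:~R / d%:R)) (sin (2 * pi * z%:~R / d%:R)).

Lemma cos_sin_int (q : int) :
  cos (q%:~R * (pi *+ 2)) = 1 :> R /\ sin (q%:~R * (pi *+ 2)) = 0 :> R.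
Proof.
have hn : forall n : nat, cos (n%:R * (pi *+ 2)) = 1 :> R /\ sin (n%:R * (pi *+ 2)) = 0 :> R.
  elim=> [|n [IHc IHs]]; first by rewrite mul0r cos0 sin0.
  by rewrite -addn1 natrD mulrDl mul1r cosD2pi sinD2pi.
case: q => n; first by rewrite -pmulrn; exact: hn.
rewrite NegzE mulrNz mulNr cosN sinN -pmulrn; have [-> ->] := hn n.+1.
by rewrite oppr0.
Qed.

Lemma Ec_period d (d0 : (0 < d)%N) (q : int) : Ec d (d%:Z * q) = 1.
Proof.
have dnz : (d%:R : R) != 0 by rewrite pnatr_eq0 -lt0n.
rewrite /Ec.
have -> : 2 * pi * (d%:Z * q)%:~R / d%:R = q%:~R * (pi *+ 2) :> R.
  rewrite intrM mulr2n -pmulrn; move: dnz; set D := (d%:R : R); set Q := (q%:~R : R).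
  clearbody D Q => dnz; by field.
have [-> ->] := cos_sin_int q.
by [].
Qed.

Lemma EcD d z1 z2 : Ec d (z1 + z2) = Ec d z1 * Ec d z2.
Proof.
rewrite /Ec intrD mulrDr mulrDl cosD sinD.
set a := cos _; set b := sin _; set c := cos _; set e := sin _.
change (((a * c - b * e) +i* (b * c + a * e)) = ((a * c - b * e) +i* (a * e + b * c)))%C.
by rewrite [(b * c + _)]addrC.
Qed.
Lemma sumC (I : finType) (P : pred I) (f g : I -> R) :
  \sum_(i | P i) (Complex (f i) (g i) : C) =
  Complex (\sum_(i | P i) f i) (\sum_(i | P i) g i).
Proof.
by elim/big_rec3: _ => // i x y z _ ->.
Qed.

Lemma Ec_mod d (d0 : (0 < d)%N) z z' : (d %| `|z - z'|)%N -> Ec d z = Ec d z'.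
Proof.
move=> h; have : (d%:Z %| z - z')%Z by rewrite dvdzE.
case/dvdzP => q hq.
have -> : z = z' + d%:Z * q by rewrite mulrC -hq addrC subrK.
by rewrite EcD Ec_period // mulr1.
Qed.

Lemma Ec_norm d z : `|Ec d z| = 1.
Proof.
rewrite normc_def /= cos2Dsin2 sqrtr1; by [].
Qed.

Section Zd3.
Variable m : nat.
Local Notation d := m.+2.
Local Notation Z := 'Z_d.

Definition ez (x : Z) : C := Ec d (val x)%:Z.

Lemma ez_int (z : int) : Ec d z = ez (z%:~R).
Proof.
apply: Ec_mod => //; rewrite -intr_Zp_eq0 mulrzBr.
by rewrite -pmulrn natr_Zp subrr.
Qed.

Lemma ezD (x y : Z) : ez (x + y) = ez x * ez y.
Proof.
have -> : x + y = ((val x)%:Z + (val y)%:Z)%:~R :> Z.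
  by rewrite mulrzDr -!pmulrn !natr_Zp.
by rewrite -ez_int EcD.
Qed.

Lemma ez_norm (x : Z) : `|ez x| = 1.
Proof. exact: Ec_norm. Qed.

Lemma ez1 (x : Z) : ez x = 1 -> x = 0.
Proof.
move=> h.
have hc : cos (2 * pi * (val x)%:Z%:~R / d%:R) = 1 :> R by move: h; rewrite /ez /Ec => -[].
have [x0|xp] := posnP (val x); first by apply: val_inj.
exfalso; clear h.
set u := pi * (val x)%:R / d%:R : R.
have dpos : (0 : R) < d%:R by rewrite ltr0n.
have u0 : 0 < u by rewrite /u divr_gt0 // mulr_gt0 ?pi_gt0 // ltr0n.
have upi : u < pi.
  rewrite /u ltr_pdivrMr // ltr_pM2l ?pi_gt0 // ltr_nat; exact: ltn_ord.
have su : 0 < sin u by apply: sin_gt0_pi; rewrite u0 upi.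
have : cos (u + u) = 1.
  rewrite -hc; congr cos; rewrite /u -pmulrn; move: dpos; set D := (d%:R : R).
  set X := ((val x)%:R : R); clearbody D X => dpos; field; exact: lt0r_neq0.
rewrite cosD -!expr2 cos2sin2 => h2.
have : sin u ^+ 2 = 0 by lra.
move/eqP; rewrite expf_eq0 /= => /eqP h3; move: su; rewrite h3 ltxx.
by [].
Qed.
Lemma lift_map n (X : 'M[Z]_n) : map_mx (fun z : int => z%:~R : Z) (lift_mx X) = X.
Proof. by apply/matrixP => i j; rewrite !mxE -pmulrn natr_Zp. Qed.

Lemma detzero_iff n (X : 'M[Z]_n) : detzero X = (\det X == 0).
Proof.
rewrite /detzero dvdzE /= -intr_Zp_eq0.
rewrite -[X in _ = (\det X == 0)]lift_map.
by rewrite (det_map_mx (intr : {rmorphism int -> Z})).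
Qed.

Lemma linform_link n (a : 'M[int]_n) (X : 'M[Z]_n) :
  ((linform a (lift_mx X))%:~R : Z) = dotm (map_mx (fun z : int => z%:~R : Z) a) X.
Proof.
rewrite /linform /dotm mulrz_sumr; apply: eq_bigr => i _.
rewrite mulrz_sumr; apply: eq_bigr => j _.
by rewrite intrM !mxE -pmulrn natr_Zp.
Qed.

Lemma S_link n (a : 'M[int]_n) :
  Complex (Sd_re R d a) (Sd_im R d a) = Ssum ez (map_mx (fun z : int => z%:~R : Z) a).
Proof.
rewrite /Sd_re /Sd_im -sumC /Ssum big_mkcond; apply: eq_bigr => X _.
rewrite detzero_iff; case: eqP => _; last by rewrite mul0r.
rewrite mul1r.
change (Ec d (linform a (lift_mx X)) = ez (dotm (map_mx (fun z : int => z%:~R : Z) a) X)).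
by rewrite ez_int linform_link.
Qed.

Lemma Sabs_link n (a : 'M[int]_n) :
  ((Sd_abs R d a)%:C)%C = `|Ssum ez (map_mx (fun z : int => z%:~R : Z) a)|.
Proof. by rewrite -S_link normc_def /=. Qed.

Lemma bound_m n' (a : 'M[int]_n'.+1) (sq : squarefree d) :
  Sd_abs R d a <= ((d ^ (n'.+1 * n'.+1 - n'.+1) * gcdLd d a ^ n'.+1)%N)%:R.
Proof.
have h := abstract_bound ezD ez_norm ez1 (regular sq) (map_mx (fun z : int => z%:~R : Z) a).
rewrite -lecR rmorph_nat Sabs_link; apply: le_trans h _.
rewrite ler_nat leq_mul2l; apply/orP; right.
by rewrite leq_exp2r // annM_card.
Qed.

End Zd3.

End Final.

Lemma gcdLd_dvd d n (a : 'M[int]_n) : (gcdLd d a %| d)%N.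
Proof.
rewrite /gcdLd; elim/big_rec: _ => // i x _ IH.
exact: dvdn_trans (dvdn_gcdr _ _) IH.
Qed.

Lemma gcdLd1 n (a : 'M[int]_n) : gcdLd 1 a = 1%N.
Proof. by apply/eqP; rewrite -dvdn1 gcdLd_dvd. Qed.

Lemma Sd_abs1 (R : realType) n (a : 'M[int]_n) : Sd_abs R 1 a = 1.
Proof.
have hc : forall L : int, cos (2 * pi * L%:~R / 1%:R) = 1 :> R /\ sin (2 * pi * L%:~R / 1%:R) = 0 :> R.
  move=> L; rewrite divr1 (_ : 2 * pi * L%:~R = L%:~R * (pi *+ 2)).
    exact: cos_sin_int.
  by rewrite mulr2n; ring.
have hdz : forall X : 'M['I_1]_n, detzero X.
  by move=> X; rewrite /detzero dvdzE dvd1n.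
have im0 : Sd_im R 1 a = 0.
  rewrite /Sd_im big1 // => X _; by case: (hc (linform a (lift_mx X))).
have re1 : Sd_re R 1 a = 1.
  rewrite /Sd_re (eq_bigr (fun _ => 1)); last by move=> X _; case: (hc (linform a (lift_mx X))).
  rewrite sumr_const (eq_card (B := predT)); last by move=> X; rewrite [RHS]inE; exact: hdz.
  by rewrite cardT -cardE card_mx card_ord exp1n.
by rewrite /Sd_abs re1 im0 expr0n /= addr0 expr1n sqrtr1.
Qed.


Lemma final_m (R : realType) m n' (a : 'M[int]_n'.+1) (ex : R) :
  squarefree m.+2 -> ex <= n'.+1%:R ->
  Sd_abs R m.+2 a <= (m.+2)%:R `^ (n'.+1 ^ 2)%:R * ((gcdLd m.+2 a)%:R / (m.+2)%:R) `^ ex.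
Proof.
move=> sq ex_le.
apply: le_trans (bound_m R a sq) _.
set D := gcdLd m.+2 a.
have Dd : (D %| m.+2)%N := gcdLd_dvd _ _.
have D0 : (0 < D)%N by case: (posnP D) Dd => // ->; rewrite dvd0n.
have Dle : (D <= m.+2)%N by rewrite dvdn_leq.
have dpos : (0 : R) < (m.+2)%:R by rewrite ltr0n.
have Dpos : (0 : R) < D%:R by rewrite ltr0n.
have q0 : (0:R) < D%:R / (m.+2)%:R by apply: mulr_gt0 => //; rewrite invr_gt0.
have q1 : D%:R / (m.+2)%:R <= (1:R) by rewrite ler_pdivrMr // mul1r ler_nat.
have q01 : (0 : R) < (D%:R / (m.+2)%:R : R) <= 1 by rewrite q0 q1.
apply: (@le_trans _ _ ((m.+2)%:R `^ (n'.+1 ^ 2)%:R * (D%:R / (m.+2)%:R) `^ n'.+1%:R)); last first.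
  by apply: ler_wpM2l; [exact: powR_ge0 | exact: ger_powR].
rewrite (powR_mulrn _ (ltW dpos)) (powR_mulrn _ (ltW q0)) expr_div_n natrM !natrX.
have e2 : (n'.+1 ^ 2 = (n'.+1 * n'.+1 - n'.+1) + n'.+1)%N.
  by rewrite subnK ?mulnn // leq_pmulr.
have dn : ((m.+2)%:R ^+ n'.+1 : R) != 0 by rewrite expf_neq0 // lt0r_neq0.
by rewrite e2 exprD -mulrA [X in _ <= _ * X]mulrCA divff // mulr1.
Qed.

Local Open Scope classical_set_scope.
Local Open Scope ring_scope.

Theorem lemma3p7 (R : realType) (n : nat) (hn : (1 <= n)%N) :
  exists eps : nat -> R,
    eps @ \oo --> (0 : R) /\
    forall (d : nat) (a : 'M[int]_n),
      (1 <= d)%N -> squarefree d ->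
      Sd_abs R d a <=
        (d%:R) `^ ((n ^ 2)%:R + eps d) *
        ((gcdLd d a)%:R / d%:R) `^ (if is_monomial a then n%:R
                                   else (n%:R + 1) / 2).
Proof.
exists (fun _ => 0); split; first exact: cvg_cst.
move=> d a d1 sq; rewrite addr0.
set ex := (if is_monomial a then _ else _).
have h1 : (1 : R) <= n%:R by rewrite ler1n.
have ex_le : ex <= n%:R by rewrite /ex; case: is_monomial => //; lra.
case: d d1 sq => [//|[|m]] _ sq.
  by rewrite gcdLd1 Sd_abs1 divr1 !powR1 mulr1.
case: n hn a ex ex_le h1 => // n' _ a ex ex_le h1.
exact: final_m.
Qed.
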